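(* Let $\Pi$ be the set of graphs $G$ satisfying $\sum_{H:|V(H)|=4} w_H\cdot p(H,G)\le \frac{5}{16}$, where $w_{K_4}=1$, $w_{\bar{K_4}}=\frac12$, $w_{D_4}=\frac{5}{12}$, $w_{\bar{D_4}}=\frac{5}{12}$, $w_{P_3}=\frac13$, $w_{\bar{P_3}}=\frac16$, $w_{C_4}=\frac12$, $w_{\bar{C_4}}=\frac13$, $w_{K_{1,3}}=\frac14$, $w_{\bar{K_{1,3}}}=\frac14$, $w_{P_4}=\frac14$. Let $n\ge4$ and let $G\sim G(n,1/2)$. Then $G\in\Pi$ with probability at least $\frac{1}{2n^4}$.
   Context: $K_4$ is the complete graph on 4 vertices, $D_4$ is $K_4$ minus an edge, $P_3$ is the 4-vertex graph consisting of a path on 3 vertices plus an isolated vertex, $C_4$ the 4-cycle, $P_4$ the path on 4 vertices, $K_{1,3}$ the star on 4 vertices, and $\bar H$ the complement of $H$. $p(H,G)$ is the fraction of induced subgraphs of $G$ on $|V(H)|$ vertices isomorphic to $H$. $G(n,1/2)$ is the uniformly random graph on $n$ labeled vertices (each pair an edge independently with probability $1/2$). *)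

(* Defs.v *)
From mathcomp Require Import all_boot all_order all_algebra.
Set Implicit Arguments. Unset Strict Implicit. Unset Printing Implicit Defensive.
Import Order.TTheory GRing.Theory Num.Theory.
Local Open Scope ring_scope.

(* A labeled simple graph on vertex set 'I_n is its edge set: a set of
   2-element subsets of 'I_n. *)
Definition two_sets (n : nat) : {set {set 'I_n}} := [set A : {set 'I_n} | #|A| == 2%N].
Definition is_graph (n : nat) (E : {set {set 'I_n}}) : bool := E \subset two_sets n.
Definition adj (n : nat) (E : {set {set 'I_n}}) (x y : 'I_n) : bool := [set x; y] \in E.

Definition edges_of (l : seq (nat * nat)) : rel 'I_4 :=
  fun i j => ((val i, val j) \in l) || ((val j, val i) \in l).
Definition gcompl (h : rel 'I_4) : rel 'I_4 := fun i j => (i != j) && ~~ h i j.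

Definition K4   : rel 'I_4 := edges_of [:: (0,1); (0,2); (0,3); (1,2); (1,3); (2,3)]%N.
Definition D4   : rel 'I_4 := edges_of [:: (0,2); (0,3); (1,2); (1,3); (2,3)]%N. (* K4 minus edge 01 *)
Definition P3   : rel 'I_4 := edges_of [:: (0,1); (1,2)]%N.         (* path 0-1-2, vertex 3 isolated *)
Definition C4   : rel 'I_4 := edges_of [:: (0,1); (1,2); (2,3); (3,0)]%N.
Definition P4   : rel 'I_4 := edges_of [:: (0,1); (1,2); (2,3)]%N.
Definition K13  : rel 'I_4 := edges_of [:: (0,1); (0,2); (0,3)]%N.

Definition ind_iso (n : nat) (E : {set {set 'I_n}}) (S : {set 'I_n}) (h : rel 'I_4) : bool :=
  [exists f : {ffun 'I_4 -> 'I_n},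
    [&& injectiveb f, (f @: setT == S) &
        [forall i, forall j, h i j == adj E (f i) (f j)]]].

Definition pdens (n : nat) (h : rel 'I_4) (E : {set {set 'I_n}}) : rat :=
  (#|[set S : {set 'I_n} | (#|S| == 4%N) && ind_iso E S h]|)%:R / ('C(n, 4))%:R.

Definition weighted_sum (n : nat) (E : {set {set 'I_n}}) : rat :=
    1 * pdens K4 E + (1/2) * pdens (gcompl K4) E
  + (5/12) * pdens D4 E + (5/12) * pdens (gcompl D4) E
  + (1/3) * pdens P3 E + (1/6) * pdens (gcompl P3) E
  + (1/2) * pdens C4 E + (1/3) * pdens (gcompl C4) E
  + (1/4) * pdens K13 E + (1/4) * pdens (gcompl K13) E
  + (1/4) * pdens P4 E.

Definition inPi (n : nat) (E : {set {set 'I_n}}) : bool := weighted_sum E <= 5/16.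

(* Probability under G(n,1/2): uniform over all labeled graphs on 'I_n. *)
Definition prob_Gn (n : nat) (P : {set {set 'I_n}} -> bool) : rat :=
  (#|[set E : {set {set 'I_n}} | is_graph E && P E]|)%:R /
  (#|[set E : {set {set 'I_n}} | is_graph E]|)%:R.

(* Main.v *)
Require Import Defs.
From mathcomp Require Import all_boot all_order all_algebra.
From mathcomp Require Import lra zify ring.
Set Implicit Arguments. Unset Strict Implicit. Unset Printing Implicit Defensive.

Definition o0 : 'I_4 := @Ordinal 4 0 isT.
Definition o1 : 'I_4 := @Ordinal 4 1 isT.
Definition o2 : 'I_4 := @Ordinal 4 2 isT.
Definition o3 : 'I_4 := @Ordinal 4 3 isT.
Definition ords4 : seq 'I_4 := [:: o0; o1; o2; o3].
Definition pairs6 : seq ('I_4 * 'I_4) := [:: (o0,o1); (o0,o2); (o0,o3); (o1,o2); (o1,o3); (o2,o3)].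
Definition pidx (i j : 'I_4) : nat :=
  match val i, val j with
  | 0, 1 | 1, 0 => 0 | 0, 2 | 2, 0 => 1 | 0, 3 | 3, 0 => 2
  | 1, 2 | 2, 1 => 3 | 1, 3 | 3, 1 => 4 | _, _ => 5 end%N.
Definition Ab (b : seq bool) (i j : 'I_4) : bool := (i != j) && nth false b (pidx i j).
Definition has4 (P : ('I_4 -> 'I_4) -> bool) : bool :=
  has (fun a => has (fun b => has (fun c => has (fun d =>
    if uniq [:: a; b; c; d] then P (fun i => nth o0 [:: a; b; c; d] i) else false) ords4) ords4) ords4) ords4.
Definition Qh (h : rel 'I_4) (b : seq bool) : bool :=
  has4 (fun f => all (fun i => all (fun j => h i j == Ab b (f i) (f j)) ords4) ords4).
Fixpoint allb (k : nat) : seq (seq bool) :=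
  if k is k'.+1 then [seq x :: s | x <- [:: true; false], s <- allb k'] else [:: [::]].
Definition all64 := allb 6.
Definition cnt h := count (Qh h) all64.
Lemma cnt0 : cnt K4 = 1%N. Proof. vm_compute. reflexivity. Qed.
Lemma cnt1 : cnt (gcompl K4) = 1%N. Proof. vm_compute. reflexivity. Qed.
Lemma cnt2 : cnt D4 = 6%N. Proof. vm_compute. reflexivity. Qed.
Lemma cnt3 : cnt (gcompl D4) = 6%N. Proof. vm_compute. reflexivity. Qed.
Lemma cnt4 : cnt P3 = 12%N. Proof. vm_compute. reflexivity. Qed.
Lemma cnt5 : cnt (gcompl P3) = 12%N. Proof. vm_compute. reflexivity. Qed.
Lemma cnt6 : cnt C4 = 3%N. Proof. vm_compute. reflexivity. Qed.
Lemma cnt7 : cnt (gcompl C4) = 3%N. Proof. vm_compute. reflexivity. Qed.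
Lemma cnt8 : cnt K13 = 4%N. Proof. vm_compute. reflexivity. Qed.
Lemma cnt9 : cnt (gcompl K13) = 4%N. Proof. vm_compute. reflexivity. Qed.
Lemma cnt10 : cnt P4 = 12%N. Proof. vm_compute. reflexivity. Qed.
Lemma u64 : uniq all64. Proof. by vm_compute. Qed.

Lemma ords4P (P : 'I_4 -> Prop) : P o0 -> P o1 -> P o2 -> P o3 -> forall i, P i.
Proof.
move=> H0 H1 H2 H3 [[|[|[|[|i]]]] Hi] //.
- by rewrite (_ : Ordinal Hi = o0) //; apply: val_inj.
- by rewrite (_ : Ordinal Hi = o1) //; apply: val_inj.
- by rewrite (_ : Ordinal Hi = o2) //; apply: val_inj.
- by rewrite (_ : Ordinal Hi = o3) //; apply: val_inj.
Qed.

Lemma mem_ords4 (i : 'I_4) : i \in ords4.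
Proof. by elim/ords4P: i. Qed.

Lemma L3 (P : ('I_4 -> 'I_4) -> bool) :
  (forall f f', f =1 f' -> P f = P f') ->
  [exists f : {ffun 'I_4 -> 'I_4}, injectiveb f && P f] = has4 P.
Proof.
move=> Pext; apply/idP/idP.
  case/existsP=> f /andP [/injectiveP finj Pf].
  apply/hasP; exists (f o0); first exact: mem_ords4.
  apply/hasP; exists (f o1); first exact: mem_ords4.
  apply/hasP; exists (f o2); first exact: mem_ords4.
  apply/hasP; exists (f o3); first exact: mem_ords4.
  apply/andP; split.
    by rewrite /= !inE !(inj_eq finj).
  rewrite (Pext _ f) //; by elim/ords4P.
case/hasP=> a _ /hasP [b _ /hasP [c _ /hasP [d _ /andP [U Pf]]]].
apply/existsP; exists [ffun i : 'I_4 => nth o0 [:: a; b; c; d] i].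
apply/andP; split.
  apply/injectiveP => i j /=; rewrite !ffunE => /eqP.
  by rewrite (nth_uniq o0 _ _ U) ?ltn_ord // => /eqP e; apply: val_inj.
by rewrite (Pext _ (fun i => nth o0 [:: a; b; c; d] i)) // => i; rewrite ffunE.
Qed.

Section G.
Variable n : nat.
Variable g : 'I_4 -> 'I_n.
Hypothesis ginj : injective g.

Definition pr k := nth (o0, o0) pairs6 k.
Definition T k : {set 'I_n} := [set g (pr k).1; g (pr k).2].
Definition beta (E : {set {set 'I_n}}) : seq bool := [seq ([set g p.1; g p.2] \in E) | p <- pairs6].
Definition tog (X E : {set {set 'I_n}}) := (E :\: X) :|: (X :\: E).
Definition Xd (d : seq bool) : {set {set 'I_n}} :=
  [set A | has (fun k => nth false d k && (A == T k)) (iota 0 6)].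
Definition xorseq (s t : seq bool) := [seq x.1 (+) x.2 | x <- zip s t].

Lemma Tinj k l : (k < 6)%N -> (l < 6)%N -> T k = T l -> k = l.
Proof.
move=> hk hl /setP e.
have e1 := e (g (pr k).1); have e2 := e (g (pr k).2).
move: e1 e2; clear e; rewrite /T !inE !(inj_eq ginj).
by case: k hk => [|[|[|[|[|[|k]]]]]] // _; case: l hl => [|[|[|[|[|[|l]]]]]].
Qed.

Lemma T2 k : (k < 6)%N -> T k \in two_sets n.
Proof.
rewrite inE cards2 (inj_eq ginj).
by case: k => [|[|[|[|[|[|k]]]]]].
Qed.

Lemma nth_beta E k : (k < 6)%N -> nth false (beta E) k = (T k \in E).
Proof. by move=> hk; rewrite /beta (nth_map (o0, o0)). Qed.

Lemma size_beta E : size (beta E) = 6%N.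
Proof. by rewrite size_map. Qed.

Lemma inXd d k : (k < 6)%N -> (T k \in Xd d) = nth false d k.
Proof.
move=> hk; rewrite inE; apply/hasP/idP.
  case=> l; rewrite mem_iota add0n => hl /andP [dl /eqP e].
  by rewrite (Tinj hk hl e).
by move=> dk; exists k; rewrite ?mem_iota ?add0n // dk eqxx.
Qed.

Lemma beta_tog d E : size d = 6%N -> beta (tog (Xd d) E) = xorseq (beta E) d.
Proof.
move=> sd; apply: (@eq_from_nth _ false).
  by rewrite size_beta /xorseq size_map size_zip size_beta sd.
move=> k; rewrite size_beta => hk.
rewrite nth_beta // /xorseq (nth_map (false, false)); last by rewrite size_zip size_beta sd.
rewrite nth_zip ?size_beta ?sd //= nth_beta // /tog in_setU !in_setD inXd //.
by case: (T k \in E); case: (nth false d k).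
Qed.

Lemma tog_inv X E : tog X (tog X E) = E.
Proof.
apply/setP => A; rewrite !inE.
by case: (A \in E); case: (A \in X).
Qed.

Lemma Xd_graph d : is_graph (Xd d).
Proof.
apply/subsetP => A; rewrite inE => /hasP [k]; rewrite mem_iota add0n => hk /andP [_ /eqP ->].
exact: T2.
Qed.

Lemma tog_graph X E : is_graph X -> is_graph E -> is_graph (tog X E).
Proof.
move=> /subsetP hX /subsetP hE; apply/subsetP => A; rewrite /tog in_setU !in_setD.
by case/orP => /andP [_ h]; [apply: hE | apply: hX].
Qed.

Lemma adjA E i j : is_graph E -> adj E (g i) (g j) = Ab (beta E) i j.
Proof.
move=> /subsetP hE.
have diag : forall x, adj E x x = false.
  move=> x; apply/negP => /hE; by rewrite inE cards2 eqxx.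
elim/ords4P: i; elim/ords4P: j; rewrite /Ab /= ?diag // /adj ?(setUC [set g o1]) ?(setUC [set g o2]) ?(setUC [set g o3]) //.
Qed.


Lemma indA (S : {set 'I_n}) (h : rel 'I_4) E :
  g @: setT = S -> is_graph E -> ind_iso E S h = Qh h (beta E).
Proof.
move=> gS gE.
rewrite /Qh -L3; last first.
  by move=> f f' e; apply: eq_all => i; apply: eq_all => j; rewrite !e.
apply/existsP/existsP.
  case=> f /and3P [/injectiveP fi /eqP fS /forallP H].
  have ex : forall i, exists k, g k == f i.
    move=> i; have : f i \in S by rewrite -fS; apply: imset_f.
    by rewrite -gS => /imsetP [k _ e]; exists k; rewrite e.
  exists [ffun i => xchoose (ex i)]; apply/andP; split.
    apply/injectiveP => i j; rewrite !ffunE => e.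
    by apply: fi; rewrite -(eqP (xchooseP (ex i))) -(eqP (xchooseP (ex j))) e.
  apply/allP => i _; apply/allP => j _; rewrite -adjA // !ffunE (eqP (xchooseP (ex i))) (eqP (xchooseP (ex j))).
  by have /forallP := H i; apply.
case=> f' /andP [/injectiveP fi' A].
have surj : f' @: setT = setT.
  by apply/eqP; rewrite eqEcard subsetT /= card_imset.
exists [ffun i => g (f' i)]; apply/and3P; split.
- by apply/injectiveP => i j; rewrite !ffunE => /ginj /fi'.
- apply/eqP; rewrite -gS; apply/setP => x; apply/imsetP/imsetP.
    by case=> i _ ->; exists (f' i); rewrite ?ffunE.
  case=> k _ ->; have : k \in f' @: setT by rewrite surj.
  by case/imsetP => i _ ->; exists i; rewrite ?ffunE.
- apply/forallP => i; apply/forallP => j; rewrite !ffunE adjA //.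
  by have /allP := A; move/(_ i (mem_ords4 i))/allP/(_ j (mem_ords4 j)).
Qed.

End G.

Lemma mem_allb k s : (s \in allb k) = (size s == k).
Proof.
elim: k s => [|k IH] [|x s] //=; rewrite !mem_cat in_nil orbF.
  by apply/negbTE/negP => /orP [] /mapP [? _].
have ci : forall c : bool, injective (cons c) by move=> c a b [].
rewrite eqSS -IH; case: x; rewrite mem_map //.
  by rewrite orbC; case: (boolP (_ \in map _ _)) => // /mapP [? _].
by case: (boolP (_ \in map (cons true) _)) => // /mapP [? _].
Qed.

Lemma xorseqK s t : size s = size t -> xorseq s (xorseq s t) = t.
Proof.
elim: s t => [|x s IH] [|y t] //= [e].
by rewrite /xorseq /= addbA addbb /= -/(xorseq s _) -/(xorseq s _) IH.
Qed.

Lemma size_xorseq s t : size (xorseq s t) = minn (size s) (size t).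
Proof. by rewrite size_map size_zip. Qed.

Import Order.TTheory GRing.Theory Num.Theory.
Local Open Scope ring_scope.

Section D.
Variable n : nat.
Variable g : 'I_4 -> 'I_n.
Hypothesis ginj : injective g.

Definition graphs := [set E : {set {set 'I_n}} | is_graph E].
Definition cb (b : seq bool) := #|[set E : {set {set 'I_n}} | is_graph E && (beta g E == b)]|.

Lemma cb_le b b' : size b = 6%N -> size b' = 6%N -> (cb b <= cb b')%N.
Proof.
move=> sb sb'.
set phi := tog (Xd g (xorseq b b')).
have phiK : cancel phi phi by move=> E; rewrite /phi tog_inv.
rewrite /cb -(card_imset _ (can_inj phiK)).
apply: subset_leq_card; apply/subsetP => E' /imsetP [E]; rewrite inE => /andP [gE /eqP bE] ->.
rewrite inE tog_graph ?Xd_graph //=.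
by rewrite /phi beta_tog // ?size_xorseq ?sb ?sb' // bE xorseqK ?sb ?sb'.
Qed.

Lemma cb_eq b : size b = 6%N -> cb b = cb (nseq 6 false).
Proof. by move=> sb; apply/eqP; rewrite eqn_leq !cb_le. Qed.

Lemma distr0 (F : seq bool -> rat) :
  \sum_(E in graphs) F (beta g E) = \sum_(b <- all64) (cb b)%:R * F b.
Proof.
transitivity (\sum_(E in graphs) \sum_(b <- all64) (if beta g E == b then F b else 0)).
  apply: eq_bigr => E _.
  rewrite (bigD1_seq (beta g E)) /= ?u64 ?mem_allb ?size_beta // eqxx big1.
    by rewrite addr0.
  by move=> b /negPf; rewrite eq_sym => ->.
rewrite exchange_big; apply: eq_bigr => b _. 
rewrite /cb mulr_natl -sumr_const big_mkcond [RHS]big_mkcond /=; apply: eq_bigr => E _.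
by rewrite !inE; case: (is_graph E); case: (beta g E == b).
Qed.

Lemma distr (F : seq bool -> rat) :
  \sum_(E in graphs) F (beta g E) = (#|graphs|%:R / 64) * \sum_(b <- all64) F b.
Proof.
have H : forall F : seq bool -> rat, \sum_(E in graphs) F (beta g E) = (cb (nseq 6 false))%:R * \sum_(b <- all64) F b.
  move=> G; rewrite distr0 mulr_sumr big_seq [in RHS]big_seq; apply: eq_bigr => b.
  by rewrite mem_allb => /eqP /cb_eq ->.
have e1 : \sum_(b <- all64) (1:rat) = (size all64)%:R.
  by rewrite -sum1_size natr_sum; apply: eq_bigr.
have := H (fun _ => 1); rewrite sumr_const e1 => ->.
rewrite H; congr (_ * _); rewrite (_ : size all64 = 64%N) //.
by rewrite mulfK // pnatr_eq0.
Qed.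
End D.

Lemma exg n (S : {set 'I_n}) : #|S| = 4%N -> exists g : 'I_4 -> 'I_n, injective g /\ g @: setT = S.
Proof.
move=> HS.
exists (fun i => enum_val (cast_ord (esym HS) i)); split.
  by move=> i j /enum_val_inj /cast_ord_inj.
apply/setP => x; apply/imsetP/idP.
  by case=> i _ ->; apply: enum_valP.
move=> xS; exists (cast_ord HS (enum_rank_in xS x)) => //.
by rewrite cast_ordK enum_rankK_in.
Qed.

Lemma card_cond (T : finType) (P Q : pred T) :
  #|[set x | P x && Q x]| = (\sum_(x | P x) (Q x : nat))%N.
Proof.
rewrite -sum1_card big_mkcond [RHS]big_mkcond; apply: eq_bigr => x _.
by rewrite inE; case: (P x); case: (Q x).
Qed.

Lemma sum_count (s : seq (seq bool)) (a : pred (seq bool)) :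
  \sum_(b <- s) ((a b : nat)%:R : rat) = (count a s)%:R.
Proof.
elim: s => [|x s IH]; first by rewrite big_nil.
by rewrite big_cons IH /= natrD.
Qed.

Lemma sum_pdens n (hn : (4 <= n)%N) h :
  \sum_(E in graphs n) pdens h E = #|graphs n|%:R / 64 * (cnt h)%:R.
Proof.
have C0 : ('C(n, 4))%:R != 0 :> rat by rewrite pnatr_eq0 -lt0n bin_gt0.
rewrite /pdens -big_distrl /=.
have e : forall E, (#|[set S : {set 'I_n} | (#|S| == 4%N) && ind_iso E S h]|%:R : rat)
   = \sum_(S : {set 'I_n} | #|S| == 4%N) ((ind_iso E S h : nat)%:R : rat).
  by move=> E; rewrite card_cond natr_sum.
rewrite (eq_bigr _ (fun E _ => e E)).
rewrite exchange_big /=.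
transitivity ((\sum_(S : {set 'I_n} | #|S| == 4%N) ((#|graphs n|%:R / 64 * (cnt h)%:R) : rat)) / ('C(n, 4))%:R).
  congr (_ / _); apply: eq_bigr => S /eqP HS.
  have [g [ginj gS]] := exg HS.
  rewrite /cnt -sum_count -(distr ginj (fun b => ((Qh h b : nat)%:R : rat))).
  apply: eq_bigr => E; rewrite inE => gE.
  by rewrite (indA ginj h gS gE).
rewrite sumr_const.
have -> : #|[pred S : {set 'I_n} | #|S| == 4%N]| = 'C(n, 4).
  by rewrite -[in RHS](card_ord n) -(card_draws 'I_n 4%N); apply: eq_card => S; rewrite inE.
by rewrite -[_ *+ 'C(n, 4)]mulr_natr mulfK.
Qed.

Lemma sum_ws n (hn : (4 <= n)%N) :
  \sum_(E in graphs n) weighted_sum E = #|graphs n|%:R * (5 / 16).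
Proof.
rewrite /weighted_sum !big_split /= -!mulr_sumr !sum_pdens //.
rewrite cnt0 cnt1 cnt2 cnt3 cnt4 cnt5 cnt6 cnt7 cnt8 cnt9 cnt10.
set N : rat := #|graphs n|%:R.
rewrite /=. lra.
Qed.

Lemma ff n : (n ^_ 4 <= n ^ 4)%N.
Proof. rewrite !ffactnS ffactn0 !expnS expn0; repeat apply: leq_mul => //; lia. Qed.

Lemma ws_ge0 n (E : {set {set 'I_n}}) : 0 <= weighted_sum E.
Proof.
have P0 : forall h, 0 <= pdens h E by move=> h; rewrite /pdens divr_ge0 ?ler0n.
rewrite /weighted_sum.
have := P0 K4; have := P0 (gcompl K4); have := P0 D4; have := P0 (gcompl D4).
have := P0 P3; have := P0 (gcompl P3); have := P0 C4; have := P0 (gcompl C4).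
have := P0 K13; have := P0 (gcompl K13); have := P0 P4.
lra.
Qed.

Lemma gran_alg (C k0 k1 k2 k3 k4 k5 k6 k7 k8 k9 k10 : nat) : (0 < C)%N ->
  (5 / 16 : rat) < 1 * (k0%:R / C%:R) + 1/2 * (k1%:R / C%:R) + 5/12 * (k2%:R / C%:R)
   + 5/12 * (k3%:R / C%:R) + 1/3 * (k4%:R / C%:R) + 1/6 * (k5%:R / C%:R)
   + 1/2 * (k6%:R / C%:R) + 1/3 * (k7%:R / C%:R) + 1/4 * (k8%:R / C%:R)
   + 1/4 * (k9%:R / C%:R) + 1/4 * (k10%:R / C%:R) ->
  (5 / 16 + 1 / (C * 48)%N%:R : rat) <= 1 * (k0%:R / C%:R) + 1/2 * (k1%:R / C%:R) + 5/12 * (k2%:R / C%:R)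
   + 5/12 * (k3%:R / C%:R) + 1/3 * (k4%:R / C%:R) + 1/6 * (k5%:R / C%:R)
   + 1/2 * (k6%:R / C%:R) + 1/3 * (k7%:R / C%:R) + 1/4 * (k8%:R / C%:R)
   + 1/4 * (k9%:R / C%:R) + 1/4 * (k10%:R / C%:R) :> rat.
Proof.
move=> Cpos.
have C0 : C%:R != 0 :> rat by rewrite pnatr_eq0 -lt0n.
have X0 : 0 < (C * 48)%N%:R :> rat by rewrite ltr0n muln_gt0 Cpos.
set m := (k0*48 + k1*24 + k2*20 + k3*20 + k4*16 + k5*8 + k6*24 + k7*16 + k8*12 + k9*12 + k10*12)%N.
have -> : 1 * (k0%:R / C%:R) + 1/2 * (k1%:R / C%:R) + 5/12 * (k2%:R / C%:R)
   + 5/12 * (k3%:R / C%:R) + 1/3 * (k4%:R / C%:R) + 1/6 * (k5%:R / C%:R)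
   + 1/2 * (k6%:R / C%:R) + 1/3 * (k7%:R / C%:R) + 1/4 * (k8%:R / C%:R)
   + 1/4 * (k9%:R / C%:R) + 1/4 * (k10%:R / C%:R) = m%:R / (C * 48)%N%:R :> rat.
  rewrite /m !natrD !natrM; field; exact: C0.
move=> H; rewrite ler_pdivlMr //; rewrite ltr_pdivlMr // in H.
have e1 : 5 / 16 * (C * 48)%N%:R = (C * 15)%N%:R :> rat by rewrite !natrM; field.
rewrite e1 in H.
have -> : (5 / 16 + 1 / (C * 48)%N%:R) * (C * 48)%N%:R = (C * 15 + 1)%N%:R :> rat.
  rewrite !natrD !natrM; field; exact: C0.
by rewrite ler_nat addn1; rewrite ltr_nat in H.
Qed.

Lemma gran n (hn : (4 <= n)%N) (E : {set {set 'I_n}}) :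
  ~~ inPi E -> 5 / 16 + 1 / ('C(n, 4) * 48)%N%:R <= weighted_sum E.
Proof.
rewrite /inPi -ltNge /weighted_sum /pdens; apply: gran_alg.
by rewrite bin_gt0.
Qed.

Unset Implicit Arguments.
Theorem lemma2p5 (n : nat) (hn : (4 <= n)%N) :
  1 / (2 * (n ^ 4)%N)%:R <= prob_Gn (@inPi n).
Proof.
have Cpos : (0 < 'C(n, 4))%N by rewrite bin_gt0.
have HD : ('C(n, 4) * 48 <= 2 * n ^ 4)%N.
  have := bin_ffact n 4; have := ff n.
  rewrite (_ : 4`! = 24%N) //; lia.
have Npos : (0 < #|graphs n|)%N.
  by apply/card_gt0P; exists set0; rewrite inE /is_graph sub0set.
rewrite /prob_Gn -/(graphs n).
set C := 'C(n, 4) in Cpos HD *.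
set N := #|graphs n| in Npos *.
set p := #|[set E | is_graph E && inPi E]|.
have eN : (N%:R : rat) = \sum_(E in graphs n) 1 by rewrite sumr_const.
have eP : (p%:R : rat) = \sum_(E in graphs n | inPi E) 1.
  by rewrite -sumr_const; apply: eq_bigl => E; rewrite !inE.
set q := \sum_(E in graphs n | ~~ inPi E) (1 : rat).
have eNpq : (N%:R : rat) = p%:R + q by rewrite eN eP (bigID (fun E => inPi E)).
set d : rat := 1 / (C * 48)%N%:R.
have S := sum_ws hn; rewrite (bigID (fun E => inPi E)) /= in S.
have S1 : 0 <= \sum_(E in graphs n | inPi E) weighted_sum E by apply: sumr_ge0 => E _; apply: ws_ge0.
have S2 : (5 / 16 + d) * q <= \sum_(E in graphs n | ~~ inPi E) weighted_sum E.
  rewrite /q mulr_sumr; apply: ler_sum => E /andP [_ hE]; rewrite mulr1.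
  exact: gran.
have q0 : 0 <= q by apply: sumr_ge0.
have p0 : 0 <= (p%:R : rat) by apply: ler0n.
have X48 : 48 <= (C * 48)%N%:R :> rat.
  by rewrite natrM ler_peMl // ler1n.
have d0 : 0 < d by rewrite /d divr_gt0 // ltr0n muln_gt0 Cpos.
have d48 : d <= 1 / 48.
  rewrite /d !div1r lef_pV2 ?posrE //; lra.
have dN : d * N%:R <= p%:R by nra.
apply: (@le_trans _ _ d).
  rewrite /d !div1r lef_pV2 ?posrE ?ltr0n ?muln_gt0 ?Cpos //.
    by rewrite ler_nat.
  have n0 : (0 < n)%N by lia.
  by rewrite n0.
rewrite ler_pdivlMr //; by rewrite ltr0n.
Qed.
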